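(* Let $\lambda$ be a nonzero real number. For all integers $m,n\ge0$, \[ \phi_{n+m,\lambda}(x)=\sum_{j=0}^{m}\sum_{k=0}^{n}{m\brace j}_\lambda\binom{n}{k}(j-m\lambda)_{n-k,\lambda}\,x^{j}\,\phi_{k,\lambda}(x) \] as polynomials in $x$; equivalently, the same identity holds with $x$ replaced by the boson creation operator $a^{+}$.
   Context: $(x)_{0,\lambda}=1$ and $(x)_{n,\lambda}=x(x-\lambda)\cdots(x-(n-1)\lambda)$ for $n\ge1$. The degenerate Stirling numbers of the second kind ${n\brace k}_\lambda$ are defined by $(x)_{n,\lambda}=\sum_{k=0}^{n}{n\brace k}_\lambda (x)_k$, with $(x)_k=x(x-1)\cdots(x-k+1)$. The degenerate Bell polynomials are $\phi_{n,\lambda}(x)=\sum_{k=0}^{n}{n\brace k}_\lambda x^{k}$ (equivalently $\sum_{n\ge0}\phi_{n,\lambda}(x)t^n/n!=e^{x((1+\lambda t)^{1/\lambda}-1)}$). *)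

(* Defs.v *)
From HB Require Import structures.
From mathcomp Require Import all_boot all_order all_algebra.
From mathcomp Require Import ring.
Set Implicit Arguments. Unset Strict Implicit. Unset Printing Implicit Defensive.
Import Order.TTheory GRing.Theory Num.Theory.
Local Open Scope ring_scope.

Definition dfall (R : nzRingType) (lam x : R) (n : nat) : R :=
  \prod_(i < n) (x - i%:R * lam).

Definition ffact (R : nzRingType) (x : R) (n : nat) : R :=
  \prod_(i < n) (x - i%:R).

(* Degenerate Stirling numbers of the second kind {n brace k}_lam, computed by
   the recurrence coming from (x)_{n+1,lam} = (x)_{n,lam} (x - n lam) and
   (x)_k (x - n lam) = (x)_{k+1} + (k - n lam) (x)_k.  The lemma
   [dfall_dstirling] below checks that they are exactly the coefficients in
   (x)_{n,lam} = sum_k {n brace k}_lam (x)_k, which is the paper's definition. *)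
Fixpoint dstirling (R : nzRingType) (lam : R) (n : nat) : nat -> R :=
  match n with
  | 0 => fun k => if k is 0 then 1 else 0
  | n'.+1 => fun k =>
      match k with
      | 0 => (0 - n'%:R * lam) * dstirling lam n' 0
      | k'.+1 => dstirling lam n' k' + (k'.+1%:R - n'%:R * lam) * dstirling lam n' k'.+1
      end
  end.

Definition dbell (R : nzRingType) (lam : R) (n : nat) : {poly R} :=
  \sum_(k < n.+1) dstirling lam n k *: 'X^k.

Lemma dstirling_gt (R : nzRingType) (lam : R) n k : (n < k)%N -> dstirling lam n k = 0.
Proof.
elim: n k => [|n IH] [|k] //= hk.
by rewrite !IH ?mulr0 ?addr0 // ltnW.
Qed.

Lemma dfall_dstirling (R : comNzRingType) (lam x : R) n :
  dfall lam x n = \sum_(k < n.+1) dstirling lam n k * ffact x k.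
Proof.
elim: n => [|n IH].
  by rewrite /dfall big_ord0 big_ord1 /ffact big_ord0 /= mulr1.
rewrite /dfall big_ord_recr /= -/(dfall lam x n) IH big_distrl /=.
have E k : ffact x k * (x - n%:R * lam) = ffact x k.+1 + (k%:R - n%:R * lam) * ffact x k.
  by rewrite /ffact big_ord_recr /=; ring.
under eq_bigr do rewrite -mulrA E mulrDr.
rewrite big_split /= [in RHS]big_ord_recl /=.
have HB : \sum_(i < n.+1) dstirling lam n i * ((i%:R - n%:R * lam) * ffact x i)
  = \sum_(i < n.+2) (i%:R - n%:R * lam) * dstirling lam n i * ffact x i.
  rewrite [in RHS]big_ord_recr /= dstirling_gt // mulr0 mul0r addr0.
  by apply: eq_bigr => i _; ring.
rewrite HB [\sum_(i < n.+2) _]big_ord_recl /=.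
rewrite /ffact big_ord0 !mulr1.
have -> : \sum_(i < n.+1) ((bump 0 i)%:R - n%:R * lam) * dstirling lam n (bump 0 i)
            * \prod_(i0 < bump 0 i) (x - i0%:R)
        = \sum_(i < n.+1) (i.+1%:R - n%:R * lam) * dstirling lam n i.+1
            * \prod_(i0 < i.+1) (x - i0%:R) by [].
have -> : \sum_(i < n.+1) dstirling lam n.+1 (bump 0 i) * \prod_(i0 < bump 0 i) (x - i0%:R)
        = \sum_(i < n.+1) (dstirling lam n i * \prod_(i0 < i.+1) (x - i0%:R)
           + (i.+1%:R - n%:R * lam) * dstirling lam n i.+1 * \prod_(i0 < i.+1) (x - i0%:R)).
  by apply: eq_bigr => i _; rewrite /bump /=; ring.
rewrite big_split /=; ring.
Qed.

(* Main.v *)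
Require Import Defs.
From HB Require Import structures.
From mathcomp Require Import all_boot all_order all_algebra.
From mathcomp Require Import ring.
Import Order.TTheory GRing.Theory Num.Theory.
Set Implicit Arguments. Unset Strict Implicit. Unset Printing Implicit Defensive.
Local Open Scope ring_scope.

Definition Lop (R : comNzRingType) (c : R) (p : {poly R}) : {poly R} :=
  'X * p + 'X * p^`() - c%:P * p.

Lemma LopD (R : comNzRingType) (c : R) p q : Lop c (p + q) = Lop c p + Lop c q.
Proof. rewrite /Lop derivD; ring. Qed.

Lemma Lop0 (R : comNzRingType) (c : R) : Lop c 0 = 0.
Proof. rewrite /Lop deriv0; ring. Qed.

Lemma LopZ (R : comNzRingType) (c a : R) p : Lop c (a *: p) = a *: Lop c p.
Proof. rewrite /Lop derivZ -!mul_polyC; ring. Qed.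

Lemma Lop_sum (R : comNzRingType) (c : R) (I : Type) (r : seq I) (P : pred I) (F : I -> {poly R}) :
  Lop c (\sum_(i <- r | P i) F i) = \sum_(i <- r | P i) Lop c (F i).
Proof. exact: (big_morph _ (@LopD R c) (Lop0 c)). Qed.

Lemma XderXn (R : comNzRingType) (k : nat) : 'X * ('X^k : {poly R})^`() = (k%:R)%:P * 'X^k.
Proof.
rewrite derivXn polyC_natr; case: k => [|k]; first by rewrite mulr0n mulr0 mul0r.
by rewrite mulrnAr -exprS mulr_natl.
Qed.

Lemma LopX (R : comNzRingType) (c : R) k :
  Lop c ('X^k) = 'X^(k.+1) + (k%:R - c)%:P * ('X^k : {poly R}).
Proof. rewrite /Lop XderXn exprS polyCB; ring. Qed.

Lemma Lop_mulXn (R : comNzRingType) (c : R) j p :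
  Lop c ('X^j * p) = 'X^j * Lop (c - j%:R) p.
Proof.
rewrite /Lop derivM mulrDr (mulrA 'X (('X^j)^`())) XderXn polyCB polyC_natr; ring.
Qed.

Lemma dbell_rec (R : comNzRingType) (lam : R) n :
  dbell lam n.+1 = Lop (n%:R * lam) (dbell lam n).
Proof.
rewrite /dbell Lop_sum; symmetry.
under eq_bigr do rewrite LopZ LopX scalerDr mul_polyC scalerA.
rewrite big_split /=.
have H2 : \sum_(i < n.+1) (dstirling lam n i * (i%:R - n%:R * lam)) *: ('X^i : {poly R})
   = \sum_(i < n.+2) (dstirling lam n i * (i%:R - n%:R * lam)) *: 'X^i.
  by rewrite [in RHS]big_ord_recr /= dstirling_gt // mul0r scale0r addr0.
rewrite H2 [X in _ + X = _]big_ord_recl [in RHS]big_ord_recl /=.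
rewrite /bump /=.
rewrite (mulrC (dstirling lam n 0)) addrCA; congr (_ + _).
rewrite -big_split /=; apply: eq_bigr => i _.
by rewrite add0n add1n scalerDl mulrC.
Qed.

Fixpoint Pa (R : comNzRingType) (lam a : R) (n : nat) : {poly R} :=
  match n with 0 => 1 | n'.+1 => Lop (n'%:R * lam - a) (Pa lam a n') end.

Lemma Lop_shift (R : comNzRingType) (c c' : R) p : Lop c p = Lop c' p + (c' - c) *: p.
Proof. rewrite /Lop -mul_polyC polyCB; ring. Qed.

Lemma dfallS (R : comNzRingType) (lam a : R) k : dfall lam a k.+1 = dfall lam a k * (a - k%:R * lam).
Proof. by rewrite /dfall big_ord_recr. Qed.

Lemma Pa_expand (R : comNzRingType) (lam a : R) n :
  Pa lam a n = \sum_(k < n.+1) ('C(n, k)%:R * dfall lam a (n - k)) *: dbell lam k.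
Proof.
elim: n => [|n IH].
  by rewrite big_ord1 /= /dfall big_ord0 /dbell big_ord1 /= mulr1 !scale1r.
rewrite /= IH Lop_sum.
have E (k : 'I_n.+1) : Lop (n%:R * lam - a) (('C(n, k)%:R * dfall lam a (n - k)) *: dbell lam k)
   = ('C(n, k)%:R * dfall lam a (n - k)) *: dbell lam k.+1
     + ('C(n, k)%:R * dfall lam a (n - k).+1) *: dbell lam k.
  rewrite LopZ (Lop_shift _ (k%:R * lam)) -(dbell_rec lam k) scalerDr scalerA.
  congr (_ + _ *: _).
  have hk : (k <= n)%N by rewrite -ltnS.
  rewrite dfallS (natrB R hk); ring.
rewrite (eq_bigr _ (fun k _ => E k)) big_split /=.
rewrite [in RHS]big_ord_recl /=.
under [in RHS]eq_bigr do rewrite /bump /= add1n subSS binS natrD mulrDl scalerDl.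
rewrite big_split /= [in LHS]addrC [in RHS]addrA; congr (_ + _).
rewrite [in LHS]big_ord_recl [in RHS]big_ord_recr /=.
rewrite (@bin_small n n.+1) // mul0r scale0r addr0.
rewrite !bin0 !subn0; congr (_ + _).
apply: eq_bigr => i _; rewrite /bump /= add1n subnSK //.
Qed.

Fixpoint iterL (R : comNzRingType) (lam : R) (m n : nat) (q : {poly R}) : {poly R} :=
  match n with 0 => q | n'.+1 => Lop ((n' + m)%:R * lam) (iterL lam m n' q) end.

Lemma iterL_D (R : comNzRingType) (lam : R) m n p q :
  iterL lam m n (p + q) = iterL lam m n p + iterL lam m n q.
Proof. by elim: n => [|n IH] //=; rewrite IH LopD. Qed.

Lemma iterL_0 (R : comNzRingType) (lam : R) m n : iterL lam m n 0 = 0.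
Proof. by elim: n => [|n IH] //=; rewrite IH Lop0. Qed.

Lemma iterL_Z (R : comNzRingType) (lam : R) m n c q :
  iterL lam m n (c *: q) = c *: iterL lam m n q.
Proof. by elim: n => [|n IH] //=; rewrite IH LopZ. Qed.

Lemma iterL_sum (R : comNzRingType) (lam : R) m n (I : Type) (r : seq I) (P : pred I) (F : I -> {poly R}) :
  iterL lam m n (\sum_(i <- r | P i) F i) = \sum_(i <- r | P i) iterL lam m n (F i).
Proof. exact: (big_morph _ (@iterL_D R lam m n) (iterL_0 lam m n)). Qed.

Lemma iter_dbell (R : comNzRingType) (lam : R) m n :
  dbell lam (n + m) = iterL lam m n (dbell lam m).
Proof. by elim: n => [|n IH] //=; rewrite addSn dbell_rec IH. Qed.

Lemma iterL_Xn (R : comNzRingType) (lam : R) m n j :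
  iterL lam m n 'X^j = 'X^j * Pa lam (j%:R - m%:R * lam) n.
Proof.
elim: n => [|n IH] /=; first by rewrite mulr1.
rewrite IH Lop_mulXn natrD; congr (_ * Lop _ _); ring.
Qed.

Theorem theorem2p5 (R : realFieldType) (lam : R) (hlam : lam != 0) (m n : nat) :
  dbell lam (n + m) =
  \sum_(j < m.+1) \sum_(k < n.+1)
     (dstirling lam m j * 'C(n, k)%:R * dfall lam (j%:R - m%:R * lam) (n - k))
       *: ('X^j * dbell lam k).
Proof.
rewrite iter_dbell /dbell iterL_sum; apply: eq_bigr => j _.
rewrite iterL_Z iterL_Xn Pa_expand mulr_sumr scaler_sumr; apply: eq_bigr => k _.
by rewrite -scalerAr scalerA mulrA.
Qed.
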